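(* Let $p\ge 2$ and $n\ge 1$ be integers, let $u\in C^2([0,1])$ with $m_2\le u''(x)\le M_2$ for all $x\in[0,1]$ (real constants $m_2\le M_2$), let $0=x_0<x_1<\dots<x_{N+1}=1$ be a partition with $h_i=x_{i+1}-x_i$ and $h=\max_{0\le i\le N}h_i$, and let $u_I$ be the $P_1$-interpolant of $u$ on this partition. Then $$\|u-u_I\|_{1,p}^p\le\frac{(n+2)^{p-1}}{p+1}\left(\frac{1}{2^{p-1}n^p}+\frac{2S_p^*(n)}{n^{2p+1}}\right)\left(h^p+\frac{h^{2p}}{p}\right)\|u''\|_\infty^p+\frac{1}{3n}\left(\frac38\right)^p\left(h^p+\frac{h^{2p}}{p}\right)(M_2-m_2)^p,$$ where $S_p^*(n)=\sum_{k=1}^{n-1}k^{p+1}$ for $n\ge2$ and $S_p^*(1)=0$.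
   Context: $u_I$ is the continuous function on $[0,1]$ that is affine on each $[x_i,x_{i+1}]$ and satisfies $u_I(x_i)=u(x_i)$ for $i=0,\dots,N+1$. For $v\in W^{1,p}(]0,1[)$, $\|v\|_{0,p}=\left(\int_0^1|v(x)|^p\,dx\right)^{1/p}$ and $\|v\|_{1,p}=\left(\|v\|_{0,p}^p+\|v'\|_{0,p}^p\right)^{1/p}$, with $v'$ the weak derivative. $\|u''\|_\infty=\sup_{x\in[0,1]}|u''(x)|$. *)

(* Defs.v *)
From Stdlib Require Import Reals.
From Coquelicot Require Import Coquelicot.
Open Scope R_scope.

Definition C2_on_01 (u : R -> R) : Prop :=
  forall x, 0 <= x <= 1 ->
    ex_derive u x /\ ex_derive (Derive u) x /\
    continuous (Derive (Derive u)) x.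

Definition partition01 (x : nat -> R) (N : nat) : Prop :=
  x 0%nat = 0 /\ x (S N) = 1 /\ (forall i, (i <= N)%nat -> x i < x (S i)).

Fixpoint hmax (x : nat -> R) (N : nat) : R :=
  match N with
  | O => x 1%nat - x 0%nat
  | S k => Rmax (hmax x k) (x (S (S k)) - x (S k))
  end.

Definition P1_interpolant (u uI : R -> R) (x : nat -> R) (N : nat) : Prop :=
  (forall t, 0 <= t <= 1 -> continuous uI t) /\
  (forall i, (i <= N)%nat -> exists a b : R,
      forall t, x i <= t <= x (S i) -> uI t = a * t + b) /\
  (forall i, (i <= S N)%nat -> uI (x i) = u (x i)).

Definition Lp_pow (p : nat) (v : R -> R) : R :=
  RInt (fun t => Rabs (v t) ^ p) 0 1.

(** ||v||_{1,p}^p = ||v||_{0,p}^p + ||v'||_{0,p}^p, where for a continuous,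
    piecewise C^1 function v the weak derivative is (a.e.) its classical
    derivative Derive v. *)
Definition W1p_pow (p : nat) (v : R -> R) : R :=
  Lp_pow p v + Lp_pow p (Derive v).

Definition sup_norm_d2 (u : R -> R) : R :=
  real (Lub_Rbar (fun y => exists x, 0 <= x <= 1 /\
                               y = Rabs (Derive (Derive u) x))).

Fixpoint Sstar (p n : nat) : R :=
  match n with
  | O => 0
  | S m => Sstar p m + INR m ^ (p + 1)
  end.

(* Main.v *)
Require Import Defs.
From Stdlib Require Import Reals Lra Lia.
From Coquelicot Require Import Coquelicot.
Open Scope R_scope.

Lemma bern (x : R) (k : nat) : 0 <= x -> 1 + INR k * x <= (1 + x) ^ k.
Proof.
  intros Hx; induction k as [|k IH]; [simpl; lra|].
  rewrite S_INR; cbn [pow].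
  assert (0 <= INR k) by apply pos_INR.
  assert (0 <= INR k * x * x) by (apply Rmult_le_pos; [apply Rmult_le_pos|]; lra).
  nra.
Qed.

Lemma pow_diff_le (x y : R) (k : nat) : 0 <= y <= x ->
  x ^ S k - y ^ S k <= INR (S k) * x ^ k * (x - y).
Proof.
  intros Hxy; induction k as [|k IH].
  - simpl; lra.
  - change (x ^ S (S k)) with (x * x ^ S k).
    change (y ^ S (S k)) with (y * y ^ S k).
    assert (Hyk : y ^ S k <= x ^ S k) by (apply pow_incr; lra).
    assert (0 <= x ^ k) by (apply pow_le; lra).
    replace (x * x ^ S k - y * y ^ S k) with (x * (x ^ S k - y ^ S k) + y ^ S k * (x - y)) by ring.
    rewrite (S_INR (S k)).
    change (x ^ S k) with (x * x ^ k) at 2.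
    assert (x * (x ^ S k - y ^ S k) <= x * (INR (S k) * x ^ k * (x - y))) by (apply Rmult_le_compat_l; lra).
    assert (y ^ S k * (x - y) <= x ^ S k * (x - y)) by (apply Rmult_le_compat_r; lra).
    simpl in *. nra.
Qed.

Lemma Sstar_lb (p m : nat) : INR (p + 2) * Sstar p (S m) >= INR m ^ (p + 2).
Proof.
  induction m as [|m IH].
  - simpl. replace (p+2)%nat with (S (S p)) by lia. simpl. rewrite Rmult_0_l.
    replace (p+1)%nat with (S p) by lia. simpl. lra.
  - change (Sstar p (S (S m))) with (Sstar p (S m) + INR (S m) ^ (p + 1)).
    assert (H := pow_diff_le (INR (S m)) (INR m) (p+1)).
    assert (0 <= INR m) by apply pos_INR.
    rewrite S_INR in H |- *.
    specialize (H ltac:(lra)).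
    replace (INR m + 1 - INR m) with 1 in H by ring.
    replace (p+2)%nat with (S (p+1)) in IH |- * by lia.
    rewrite S_INR in IH, H |- *. rewrite plus_INR in IH, H |- *. simpl INR in IH, H |- *.
    cbn [pow] in *. 
    set (a := (INR m + 1) ^ (p + 1)) in *. set (b := INR m ^ (p + 1)) in *.
    lra.
Qed.

Lemma pow2_ge (k : nat) : (1 <= k)%nat -> INR (k+2) * INR (k+3) <= 3 * 2 ^ (k+1).
Proof.
  intros Hk; induction k as [|k IH]; [lia|].
  destruct (Nat.eq_dec k 0) as [->|Hk0]; [simpl; lra|].
  specialize (IH ltac:(lia)).
  replace (S k + 2)%nat with (S (k+2)) by lia. replace (S k + 3)%nat with (S (k+3)) by lia.
  replace (S k + 1)%nat with (S (k+1)) by lia.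
  rewrite !S_INR. cbn [pow].
  rewrite !plus_INR in *. simpl INR in *.
  assert (1 <= INR k) by (replace 1 with (INR 1) by (simpl; lra); apply le_INR; lia).
  nra.
Qed.

Lemma pow2_ge' (k : nat) : (5 <= k)%nat -> 27 * (INR (k+2) * INR (k+3)) <= 8 * 2 ^ (k+3).
Proof.
  intros Hk; induction k as [|k IH]; [lia|].
  destruct (Nat.eq_dec k 4) as [->|Hk0]; [simpl; lra|].
  specialize (IH ltac:(lia)).
  replace (S k + 2)%nat with (S (k+2)) by lia. replace (S k + 3)%nat with (S (k+3)) by lia.
  rewrite !S_INR. cbn [pow].
  rewrite !plus_INR in *. simpl INR in *.
  assert (4 <= INR k) by (replace 4 with (INR 4) by (simpl; lra); apply le_INR; lia).
  nra.
Qed.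

Lemma K_ge3 (k n : nat) : (3 <= n)%nat ->
  let r := INR n in
  2 * (r - 1) ^ 3 / (INR (k+2) * INR (k+3) * r ^ 3) <=
  (r + 2) ^ k / (INR (S k) + 1) * (1 / (2 ^ k * r ^ (S k)) + 2 * Sstar (S k) n / r ^ (2 * S k + 1)).
Proof.
  intros Hn r.
  destruct n as [|m]; [lia|].
  assert (HS := Sstar_lb (S k) m).
  assert (Hr : r = INR m + 1) by (unfold r; apply S_INR).
  assert (Hm : 2 <= INR m) by (replace 2 with (INR 2) by (simpl; lra); apply le_INR; lia).
  fold r in HS. replace (INR m) with (r - 1) in HS |- * by lra.
  assert (Hr3 : 3 <= r) by lra.
  assert (HP : 0 < (r^2)^k) by (apply pow_lt; nra).
  assert (HQ : (r^2)^k <= ((r+2)*(r-1))^k) by (apply pow_incr; nra).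
  replace (S k + 2)%nat with (k+3)%nat in HS by lia.
  replace (INR (S k)) with (INR (k+2) - 1) by (rewrite plus_INR, (S_INR k); replace (INR 2) with 2 by (simpl; lra); ring).
  assert (Hk2 : 2 <= INR (k+2)) by (rewrite plus_INR; simpl; assert (0 <= INR k) by apply pos_INR; lra).
  assert (Hk3 : 0 < INR (k+3)) by (rewrite plus_INR; simpl; assert (0 <= INR k) by apply pos_INR; lra).
  set (S0 := Sstar (S k) (S m)) in *.
  assert (E1 : r ^ (2 * S k + 1) = (r^2)^k * r^3) by (rewrite <- pow_mult; rewrite <- pow_add; f_equal; lia).
  assert (E2 : (r - 1) ^ (k + 3) = (r-1)^k * (r-1)^3) by (rewrite pow_add; ring).
  assert (E3 : ((r+2)*(r-1))^k = (r+2)^k * (r-1)^k) by (rewrite Rpow_mult_distr; ring).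
  replace (INR m) with (r - 1) in HS by lra. rewrite E2 in HS. rewrite E1.
  assert (Hp1 : 0 < (r+2)^k) by (apply pow_lt; lra).
  assert (Hp2 : 0 < (r-1)^k) by (apply pow_lt; lra).
  assert (Hp3 : 0 < (r-1)^3) by (apply pow_lt; lra).
  assert (Hp4 : 0 < 2^k * r^(S k)) by (apply Rmult_lt_0_compat; apply pow_lt; lra).
  assert (Hr3' : 0 < r^3) by (apply pow_lt; lra).
  assert (HS' : (r-1)^k * (r-1)^3 / INR (k+3) <= S0) by (apply Rle_div_l; lra).
  apply Rle_trans with ((r + 2) ^ k / INR (k+2) * (2 * ((r-1)^k * (r-1)^3 / INR (k+3)) / ((r ^ 2) ^ k * r ^ 3))).
  - replace ((r + 2) ^ k / INR (k+2) * (2 * ((r-1)^k * (r-1)^3 / INR (k+3)) / ((r ^ 2) ^ k * r ^ 3)))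
      with ((((r+2)^k * (r-1)^k) / (r^2)^k) * (2 * (r - 1) ^ 3 / (INR (k + 2) * INR (k + 3) * r ^ 3))) by (field; lra).
    rewrite <- E3.
    assert (1 <= ((r + 2) * (r - 1)) ^ k / (r ^ 2) ^ k) by (apply Rle_div_r; lra).
    assert (0 <= 2 * (r - 1) ^ 3 / (INR (k + 2) * INR (k + 3) * r ^ 3)).
    { apply Rle_mult_inv_pos; [lra|]. apply Rmult_lt_0_compat; [nra|lra]. }
    nra.
  - replace (INR (k+2) - 1 + 1) with (INR (k+2)) by ring.
    apply Rmult_le_compat_l. { apply Rle_mult_inv_pos; lra. }
    assert (0 <= 1 / (2 ^ k * r ^ S k)) by (apply Rle_mult_inv_pos; lra).
    assert (0 < (r ^ 2) ^ k * r ^ 3) by nra.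
    assert (2 * ((r - 1) ^ k * (r - 1) ^ 3 / INR (k + 3)) / ((r ^ 2) ^ k * r ^ 3) <= 2 * S0 / ((r ^ 2) ^ k * r ^ 3)).
    { unfold Rdiv. apply Rmult_le_compat_r. { left; apply Rinv_0_lt_compat; lra. } lra. }
    lra.
Qed.

Lemma disc (p n : nat) : (2 <= p)%nat -> (1 <= n)%nat ->
  / 2 ^ (p + 1) <= (INR n + 2) ^ (p - 1) / (INR p + 1) *
     (1 / (2 ^ (p - 1) * INR n ^ p) + 2 * Sstar p n / INR n ^ (2 * p + 1)).
Proof.
  intros Hp Hn.
  destruct p as [|k]; [lia|].
  replace (S k - 1)%nat with k by lia.
  replace (S k + 1)%nat with (k + 2)%nat by lia.
  assert (Hk : (1 <= k)%nat) by lia.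
  assert (H2k : 0 < 2 ^ k) by (apply pow_lt; lra).
  assert (E2 : 2 ^ (k+2) = 4 * 2 ^ k) by (rewrite pow_add; simpl; ring).
  assert (Hk0 : 0 <= INR k) by apply pos_INR.
  destruct (Nat.eq_dec n 1) as [->|Hn1].
  {
    replace (Sstar (S k) 1) with 0 by (simpl; ring).
    replace (INR 1) with 1 by reflexivity. rewrite S_INR.
    rewrite !pow1.
    assert (Hb := bern 2 k ltac:(lra)).
    replace (1+2) with 3 in * by ring.
    rewrite E2.
    apply Rmult_le_reg_l with (4 * 2 ^ k); [lra|].
    rewrite Rinv_r by lra.
    replace (4 * 2 ^ k * (3 ^ k / (INR k + 1 + 1) * (1 / (2 ^ k * 1) + 2 * 0 / 1)))
      with (4 * 3 ^ k / (INR k + 1 + 1)) by (field; lra).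
    apply Rle_div_r; lra. }
  destruct (Nat.eq_dec n 2) as [->|Hn2].
  {
    replace (INR 2) with 2 by reflexivity.
    assert (HS : 0 <= Sstar (S k) 2) by (simpl; rewrite pow_i by lia; assert (0 <= 1 ^ (k+1)) by (apply pow_le; lra); lra).
    assert (Hb := bern 1 (k+1) ltac:(lra)).
    replace (1+1) with 2 in Hb by ring. rewrite plus_INR in Hb. simpl INR in Hb.
    assert (E4 : (2 + 2) ^ k = 2^k * 2^k) by (rewrite <- Rpow_mult_distr; f_equal; ring).
    rewrite E4, E2. rewrite S_INR.
    assert (0 <= 2 * Sstar (S k) 2 / 2 ^ (2 * S k + 1)).
    { apply Rle_mult_inv_pos; [lra|]. apply pow_lt; lra. }
    apply Rle_trans with (2 ^ k * 2 ^ k / (INR k + 1 + 1) * (1 / (2 ^ k * 2 ^ S k))).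
    - replace (2 ^ k * 2 ^ k / (INR k + 1 + 1) * (1 / (2 ^ k * 2 ^ S k))) with (/ (2 * (INR k + 2))).
      2: { cbn [pow]. field. lra. }
      apply Rinv_le_contravar; [lra|].
      rewrite pow_add in Hb. simpl in Hb. lra.
    - apply Rmult_le_compat_l. { apply Rle_mult_inv_pos; [|lra]. apply Rmult_le_pos; lra. }
      lra. }
  assert (Hn3 : (3 <= n)%nat) by lia.
  assert (HK := K_ge3 k n Hn3). simpl in HK.
  set (r := INR n) in *.
  assert (Hr : 3 <= r) by (unfold r; replace 3 with (INR 3) by (simpl; lra); apply le_INR; lia).
  destruct (Nat.le_gt_cases 5 k) as [Hk5|Hk5].
  - eapply Rle_trans; [|exact HK].
    assert (HA := pow2_ge' k Hk5).
    assert (E3 : 2 ^ (k+3) = 2 * 2 ^ (k+2)) by (rewrite !pow_add; simpl; ring).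
    rewrite E3 in HA.
    assert (0 <= (r-3)*(r-3)*(r-3)) by (apply Rmult_le_pos; [apply Rmult_le_pos|]; lra).
    assert (Hr1 : 8 * r ^ 3 <= 27 * (r - 1) ^ 3) by (simpl; nra).
    assert (0 < INR (k+2) * INR (k+3)) by (rewrite !plus_INR; simpl; nra).
    assert (0 < r^3) by (apply pow_lt; lra).
    apply Rle_div_r. { apply Rmult_lt_0_compat; lra. }
    rewrite E2 in *.
    apply Rmult_le_reg_l with (4 * 2 ^ k); [lra|].
    field_simplify; [|lra].
    nra.
  - destruct (Nat.le_gt_cases 11 n) as [Hn11|Hn11].
    + eapply Rle_trans; [|exact HK].
      assert (HA := pow2_ge k Hk).
      assert (E3 : 2 ^ (k+1) = 2 * 2 ^ k) by (rewrite !pow_add; simpl; ring).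
      rewrite E3 in HA.
      assert (Hr' : 11 <= r) by (unfold r; replace 11 with (INR 11) by (simpl; lra); apply le_INR; lia).
      assert (0 <= (r-11)*(r-11)*(r-11)) by (apply Rmult_le_pos; [apply Rmult_le_pos|]; lra).
      assert (Hr1 : 3 * r ^ 3 <= 4 * (r - 1) ^ 3) by (simpl; nra).
      assert (0 < INR (k+2) * INR (k+3)) by (rewrite !plus_INR; simpl; nra).
      assert (0 < r^3) by (apply pow_lt; lra).
      apply Rle_div_r. { apply Rmult_lt_0_compat; lra. }
      rewrite E2 in *.
      apply Rmult_le_reg_l with (4 * 2 ^ k); [lra|].
      field_simplify; [|lra].
      nra.
    + clear HK Hr. unfold r in *. clear r.
      destruct k as [|[|[|[|[|k]]]]]; try lia;
      (destruct n as [|[|[|[|[|[|[|[|[|[|[|n]]]]]]]]]]]; try lia);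
      cbn [Sstar INR pow Nat.mul Nat.add]; lra.
Qed.

Lemma sup_prop (u : R -> R) (m2 M2 : R) :
  (forall t, 0 <= t <= 1 -> m2 <= Derive (Derive u) t <= M2) ->
  (forall t, 0 <= t <= 1 -> Rabs (Derive (Derive u) t) <= sup_norm_d2 u) /\ 0 <= sup_norm_d2 u.
Proof.
  intros Hb.
  unfold sup_norm_d2.
  set (E := fun y => exists x, 0 <= x <= 1 /\ y = Rabs (Derive (Derive u) x)).
  destruct (Lub_Rbar_correct E) as [Hub Hlub].
  assert (HB : is_ub_Rbar E (Rabs m2 + Rabs M2)).
  { intros y [x [Hx ->]]. simpl. specialize (Hb x Hx).
    unfold Rabs; repeat destruct Rcase_abs; lra. }
  assert (H0 : E (Rabs (Derive (Derive u) 0))) by (exists 0; split; [lra|reflexivity]).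
  specialize (Hlub _ HB).
  destruct (Lub_Rbar E) as [l| |] eqn:Hl; simpl in *.
  - split.
    + intros t Ht. apply (Hub _ (ex_intro _ t (conj Ht eq_refl))).
    + specialize (Hub _ H0). simpl in Hub. assert (0 <= Rabs (Derive (Derive u) 0)) by apply Rabs_pos. lra.
  - contradiction.
  - specialize (Hub _ H0). contradiction.
Qed.

Ltac mm := unfold Rmin, Rmax in *; repeat destruct Rle_dec; lra.

Lemma lip (u : R -> R) (M : R) : C2_on_01 u ->
  (forall t, 0 <= t <= 1 -> Rabs (Derive (Derive u) t) <= M) ->
  forall s t, 0 <= s <= 1 -> 0 <= t <= 1 ->
  Rabs (Derive u s - Derive u t) <= M * Rabs (s - t).
Proof.
  intros HC HM s t Hs Ht.
  destruct (MVT_gen (Derive u) t s (Derive (Derive u))) as [c [Hc Heq]].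
  - intros y Hy. apply Derive_correct. apply (HC y). mm.
  - intros y Hy. apply continuity_pt_filterlim.
    assert (Hd : ex_derive (Derive u) y) by (apply (HC y); mm).
    exact (ex_derive_continuous _ _ Hd).
  - rewrite Heq, Rabs_mult. apply Rmult_le_compat_r; [apply Rabs_pos|].
    apply HM. mm.
Qed.

Lemma taylor_half (u : R -> R) (M sg : R) : C2_on_01 u ->
  (forall t, 0 <= t <= 1 -> Rabs (Derive (Derive u) t) <= M) ->
  Rabs sg <= 1 ->
  forall s t, 0 <= s <= 1 -> 0 <= t <= 1 ->
  sg * (u s - u t - Derive u t * (s - t)) <= M / 2 * (s - t) ^ 2.
Proof.
  intros HC HM Hsg s t Hs Ht.
  set (psi := fun r => sg * (u r - u t - Derive u t * (r - t)) - M / 2 * (r - t) ^ 2).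
  destruct (MVT_gen psi t s (fun r => sg * (Derive u r - Derive u t) - M * (r - t))) as [c [Hc Heq]].
  - intros y Hy. unfold psi.
    assert (Hd : ex_derive u y) by (apply (HC y); mm).
    auto_derive; [exact Hd|]. change (Derive (fun x => u x) y) with (Derive u y). field.
  - intros y Hy. apply continuity_pt_filterlim.
    assert (Hd : ex_derive u y) by (apply (HC y); mm).
    assert (Hp : ex_derive psi y) by (unfold psi; auto_derive; exact Hd).
    exact (ex_derive_continuous _ _ Hp).
  - assert (Hpt : psi t = 0) by (unfold psi; ring).
    assert (Hl := lip u M HC HM c t ltac:(mm) Ht).
    assert (Hct : 0 <= (c - t) * (s - t)).
    { unfold Rmin, Rmax in Hc; destruct (Rle_dec t s).
      - apply Rmult_le_pos; lra.
      - replace ((c - t) * (s - t)) with ((t - c) * (t - s)) by ring. apply Rmult_le_pos; lra. }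
    assert (Hcs : Rabs (c - t) * Rabs (s - t) = (c - t) * (s - t)) by (rewrite <- Rabs_mult; apply Rabs_pos_eq; lra).
    assert (H1 : sg * (Derive u c - Derive u t) * (s - t) <= Rabs (Derive u c - Derive u t) * Rabs (s - t)).
    { eapply Rle_trans; [apply Rle_abs|]. rewrite !Rabs_mult.
      assert (0 <= Rabs (Derive u c - Derive u t)) by apply Rabs_pos.
      assert (0 <= Rabs (s - t)) by apply Rabs_pos.
      assert (0 <= Rabs sg) by apply Rabs_pos.
      rewrite Rmult_assoc. apply Rle_trans with (1 * (Rabs (Derive u c - Derive u t) * Rabs (s - t))).
      + apply Rmult_le_compat_r; [apply Rmult_le_pos|]; lra.
      + lra. }
    assert (H2 : Rabs (Derive u c - Derive u t) * Rabs (s - t) <= M * Rabs (c - t) * Rabs (s - t)).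
    { apply Rmult_le_compat_r; [apply Rabs_pos|lra]. }
    assert (psi s <= 0).
    { replace (psi s) with (psi s - psi t) by lra. rewrite Heq.
      assert (M * Rabs (c-t) * Rabs (s-t) = M*((c-t)*(s-t))) by (rewrite Rmult_assoc, Hcs; ring).
      replace ((sg * (Derive u c - Derive u t) - M * (c - t)) * (s - t)) with
        (sg * (Derive u c - Derive u t) * (s - t) - M * ((c - t) * (s - t))) by ring.
      lra. }
    unfold psi in H. lra.
Qed.

Lemma taylor (u : R -> R) (M : R) : C2_on_01 u ->
  (forall t, 0 <= t <= 1 -> Rabs (Derive (Derive u) t) <= M) ->
  forall s t, 0 <= s <= 1 -> 0 <= t <= 1 ->
  Rabs (u s - u t - Derive u t * (s - t)) <= M / 2 * (s - t) ^ 2.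
Proof.
  intros HC HM s t Hs Ht.
  assert (H1 := taylor_half u M 1 HC HM ltac:(rewrite Rabs_R1; lra) s t Hs Ht).
  assert (H2 := taylor_half u M (-1) HC HM ltac:(rewrite Rabs_left by lra; lra) s t Hs Ht).
  apply Rabs_le. lra.
Qed.

Lemma piece (u uI : R -> R) (M a b al be : R) : C2_on_01 u ->
  (forall t, 0 <= t <= 1 -> Rabs (Derive (Derive u) t) <= M) ->
  0 <= a -> a < b -> b <= 1 ->
  (forall t, a <= t <= b -> uI t = al * t + be) -> uI a = u a -> uI b = u b ->
  forall t, a <= t <= b ->
   Rabs (u t - uI t) <= M * (b - a) ^ 2 / 8 /\
   Rabs (Derive u t - al) <= M * (b - a) / 4 * (1 + ((2 * t - a - b) / (b - a)) ^ 2).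
Proof.
  intros HC HM Ha Hab Hb Haff Hua Hub t Ht.
  assert (HM0 : 0 <= M) by (eapply Rle_trans; [apply Rabs_pos| apply (HM a)]; lra).
  assert (HRa := taylor u M HC HM a t ltac:(lra) ltac:(lra)).
  assert (HRb := taylor u M HC HM b t ltac:(lra) ltac:(lra)).
  set (Ra := u a - u t - Derive u t * (a - t)) in *.
  set (Rb := u b - u t - Derive u t * (b - t)) in *.
  set (L := b - a).
  assert (HL : 0 < L) by (unfold L; lra).
  rewrite Haff in Hua, Hub by lra. rewrite Haff by lra.
  assert (Hal : al = (u b - u a) / L) by (unfold L; field_simplify; [|lra]; apply Rmult_eq_reg_r with (b - a); [|lra]; field_simplify; lra).
  assert (Hbe : be = u a - al * a) by lra.
  split.
  - assert (Ee : (u t - (al * t + be)) * L = - (Ra * (b - t) + Rb * (t - a))).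
    { rewrite Hbe, Hal. unfold Ra, Rb, L. field. lra. }
    assert (H1 : Rabs (u t - (al * t + be)) * L <= M / 2 * (t - a) * (b - t) * L).
    { rewrite <- (Rabs_pos_eq L) by lra. rewrite <- Rabs_mult, Ee, Rabs_Ropp.
      eapply Rle_trans; [apply Rabs_triang|]. rewrite !Rabs_mult.
      rewrite (Rabs_pos_eq (b - t)) by lra. rewrite (Rabs_pos_eq (t - a)) by lra.
      assert (Rabs Ra * (b - t) <= M / 2 * (a - t) ^ 2 * (b - t)) by (apply Rmult_le_compat_r; lra).
      assert (Rabs Rb * (t - a) <= M / 2 * (b - t) ^ 2 * (t - a)) by (apply Rmult_le_compat_r; lra).
      rewrite (Rabs_pos_eq L) by lra.
      replace (M / 2 * (t - a) * (b - t) * L) with (M / 2 * (a - t) ^ 2 * (b - t) + M / 2 * (b - t) ^ 2 * (t - a)) by (unfold L; ring).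
      lra. }
    assert (H2 : Rabs (u t - (al * t + be)) <= M / 2 * (t - a) * (b - t)).
    { apply Rmult_le_reg_r with L; [lra|]. exact H1. }
    assert (H3 : (t - a) * (b - t) <= L ^ 2 / 4) by (unfold L; assert (0 <= (2*t-a-b)^2) by apply pow2_ge_0; nra).
    eapply Rle_trans; [exact H2|].
    replace (M * L ^ 2 / 8) with (M / 2 * (L ^ 2 / 4)) by field.
    rewrite Rmult_assoc. apply Rmult_le_compat_l; lra.
  - assert (Ed : (Derive u t - al) * L = Ra - Rb).
    { rewrite Hal. unfold Ra, Rb, L. field. lra. }
    assert (Ew : M * L / 4 * (1 + ((2 * t - a - b) / L) ^ 2) = M / 2 * ((a - t) ^ 2 + (b - t) ^ 2) / L).
    { unfold L. field. lra. }
    fold L. rewrite Ew.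
    apply Rle_div_r; [lra|].
    rewrite <- (Rabs_pos_eq L) at 1 by lra. rewrite <- Rabs_mult, Ed.
    unfold Rminus at 1. eapply Rle_trans; [apply Rabs_triang|]. rewrite Rabs_Ropp. lra.
Qed.

Lemma cont_pow (f : R -> R) x p : continuous f x -> continuous (fun t => f t ^ p) x.
Proof.
  intros Hf. induction p as [|p IH]; simpl.
  - apply continuous_const.
  - apply (continuous_mult f (fun t => f t ^ p)); assumption.
Qed.
Lemma cont_minus (f g : R -> R) x : continuous f x -> continuous g x -> continuous (fun t => f t - g t) x.
Proof. intros; apply (continuous_minus f g); assumption. Qed.

Lemma sum_int (F : R -> R) (x : nat -> R) (N : nat) (c : R) :
  x 0%nat = 0 -> x (S N) = 1 ->
  (forall i, (i <= N)%nat -> ex_RInt F (x i) (x (S i)) /\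
       RInt F (x i) (x (S i)) <= c * (x (S i) - x i)) ->
  ex_RInt F 0 1 /\ RInt F 0 1 <= c.
Proof.
  intros H0 H1 Hi.
  assert (Hk : forall k, (k <= S N)%nat -> ex_RInt F (x 0%nat) (x k) /\ RInt F (x 0%nat) (x k) <= c * (x k - x 0%nat)).
  { induction k as [|k IH]; intros Hk.
    - split; [apply ex_RInt_point|]. rewrite RInt_point. change (@zero R_CompleteNormedModule) with 0.
      rewrite Rminus_diag, Rmult_0_r; lra.
    - destruct (IH ltac:(lia)) as [IH1 IH2]. destruct (Hi k ltac:(lia)) as [Hi1 Hi2].
      split; [eapply ex_RInt_Chasles; eassumption|].
      rewrite <- (RInt_Chasles F _ _ _ IH1 Hi1). change plus with Rplus. simpl. lra. }
  destruct (Hk (S N) (le_n _)) as [A B]. rewrite H0, H1 in *. split; [exact A| lra].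
Qed.

Lemma chord (z : R) (p : nat) : 0 <= z <= 1 -> (1 + z) ^ p <= 1 + (2 ^ p - 1) * z.
Proof.
  intros Hz. induction p as [|p IH]; [simpl; lra|].
  cbn [pow].
  assert (0 <= (1+z)^p) by (apply pow_le; lra).
  assert (1 <= 2 ^ p) by (apply pow_R1_Rle; lra).
  assert ((1+z)*(1+z)^p <= (1+z)*(1 + (2 ^ p - 1) * z)) by (apply Rmult_le_compat_l; lra).
  assert (0 <= (2^p - 1) * (z * (1 - z))) by (apply Rmult_le_pos; [lra|apply Rmult_le_pos; lra]).
  nra.
Qed.

Lemma int_e (u uI : R -> R) (M a b al be hh : R) (p : nat) : C2_on_01 u ->
  (forall t, 0 <= t <= 1 -> Rabs (Derive (Derive u) t) <= M) ->
  (forall t, 0 <= t <= 1 -> continuous uI t) ->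
  0 <= a -> a < b -> b <= 1 -> b - a <= hh ->
  (forall t, a <= t <= b -> uI t = al * t + be) -> uI a = u a -> uI b = u b ->
  ex_RInt (fun t => Rabs (u t - uI t) ^ p) a b /\
  RInt (fun t => Rabs (u t - uI t) ^ p) a b <= (M * hh ^ 2 / 8) ^ p * (b - a).
Proof.
  intros HC HM HuI Ha Hab Hb Hh Haff Hua Hub.
  assert (HM0 : 0 <= M) by (eapply Rle_trans; [apply Rabs_pos| apply (HM a)]; lra).
  assert (Hex : ex_RInt (fun t => Rabs (u t - uI t) ^ p) a b).
  { apply (ex_RInt_continuous (V:=R_CompleteNormedModule)). intros z Hz.
    assert (Hz' : 0 <= z <= 1) by mm.
    apply (cont_pow (fun t => Rabs (u t - uI t))).
    apply (continuous_Rabs_comp (fun t => u t - uI t)).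
    apply cont_minus.
    - assert (Hd : ex_derive u z) by apply (HC z Hz'). exact (ex_derive_continuous _ _ Hd).
    - apply HuI; exact Hz'. }
  split; [exact Hex|].
  eapply Rle_trans.
  - apply (RInt_le _ (fun _ => (M * hh ^ 2 / 8) ^ p)); [lra|exact Hex|apply ex_RInt_const|].
    intros t Ht.
    destruct (piece u uI M a b al be HC HM Ha Hab Hb Haff Hua Hub t ltac:(lra)) as [H1 _].
    apply pow_incr. split; [apply Rabs_pos|].
    eapply Rle_trans; [exact H1|].
    assert ((b - a) ^ 2 <= hh ^ 2) by (apply pow_incr; lra).
    unfold Rdiv. apply Rmult_le_compat_r; [lra|]. apply Rmult_le_compat_l; lra.
  - rewrite RInt_const. change scal with Rmult. simpl. lra.
Qed.

Lemma deriv_e (u uI : R -> R) (a b al be t : R) :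
  (forall t, a <= t <= b -> uI t = al * t + be) -> a < t < b -> ex_derive u t ->
  Derive (fun t => u t - uI t) t = Derive u t - al.
Proof.
  intros Haff Ht Hd.
  apply is_derive_unique.
  apply (is_derive_ext_loc (fun y => u y - (al * y + be))).
  - assert (Hpos : 0 < Rmin (t - a) (b - t)) by (apply Rmin_pos; lra).
    exists (mkposreal _ Hpos). intros y Hy.
    change (Rabs (y - t) < Rmin (t - a) (b - t)) in Hy.
    apply Rabs_lt_between in Hy.
    rewrite Haff; [reflexivity|]. unfold Rmin in Hy; destruct Rle_dec; lra.
  - auto_derive; [exact Hd|]. change (Derive (fun x => u x) t) with (Derive u t). ring.
Qed.

Lemma int_d (u uI : R -> R) (M a b al be hh : R) (p : nat) : C2_on_01 u ->
  (forall t, 0 <= t <= 1 -> Rabs (Derive (Derive u) t) <= M) ->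
  0 <= a -> a < b -> b <= 1 -> b - a <= hh ->
  (forall t, a <= t <= b -> uI t = al * t + be) -> uI a = u a -> uI b = u b ->
  ex_RInt (fun t => Rabs (Derive (fun t => u t - uI t) t) ^ p) a b /\
  RInt (fun t => Rabs (Derive (fun t => u t - uI t) t) ^ p) a b <= (M * hh / 4) ^ p * ((2 ^ p + 2) / 3) * (b - a).
Proof.
  intros HC HM Ha Hab Hb Hh Haff Hua Hub.
  assert (HM0 : 0 <= M) by (eapply Rle_trans; [apply Rabs_pos| apply (HM a)]; lra).
  set (g := fun t => Rabs (Derive u t - al) ^ p).
  assert (Hg : ex_RInt g a b).
  { apply (ex_RInt_continuous (V:=R_CompleteNormedModule)). intros z Hz.
    assert (Hz' : 0 <= z <= 1) by mm.
    apply (cont_pow (fun t => Rabs (Derive u t - al))).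
    apply (continuous_Rabs_comp (fun t => Derive u t - al)).
    apply (cont_minus (Derive u) (fun _ => al)).
    - assert (Hd : ex_derive (Derive u) z) by apply (HC z Hz'). exact (ex_derive_continuous _ _ Hd).
    - apply continuous_const. }
  assert (Heq : forall t, Rmin a b < t < Rmax a b ->
     g t = Rabs (Derive (fun t => u t - uI t) t) ^ p).
  { intros t Ht. unfold g. rewrite (deriv_e u uI a b al be t Haff); [reflexivity|mm|].
    apply (HC t). mm. }
  assert (HG := ex_RInt_ext _ _ _ _ Heq Hg).
  split; [exact HG|].
  rewrite <- (RInt_ext _ _ _ _ Heq).
  set (L := b - a) in *.
  assert (HL : 0 < L) by (unfold L; lra).
  set (K := (M * L / 4) ^ p).
  assert (HK : 0 <= K) by (apply pow_le; unfold L; nra).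
  set (q := fun t => K * (1 + (2 ^ p - 1) * ((2 * t - a - b) / L) ^ 2)).
  set (F := fun t => K * (t + (2 ^ p - 1) * L * ((2 * t - a - b) / L) ^ 3 / 6)).
  assert (Hq : is_RInt q a b (minus (F b) (F a))).
  { apply (is_RInt_derive (V:=R_CompleteNormedModule)).
    - intros t _. unfold F, q. auto_derive; [lra|]. field. lra.
    - intros t _. assert (Hd : ex_derive q t) by (unfold q; auto_derive; lra).
      exact (ex_derive_continuous _ _ Hd). }
  assert (HFv : F b - F a = K * L * ((2 ^ p + 2) / 3)).
  { unfold F. unfold L. field. lra. }
  change (minus (F b) (F a)) with (F b - F a) in Hq.
  rewrite HFv in Hq.
  eapply Rle_trans.
  - apply (RInt_le _ q); [lra|exact Hg|eexists; exact Hq|].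
    intros t Ht.
    destruct (piece u uI M a b al be HC HM Ha Hab Hb Haff Hua Hub t ltac:(lra)) as [_ H2].
    fold L in H2. unfold g, q.
    set (w := (2 * t - a - b) / L) in *.
    assert (Hw : w ^ 2 <= 1).
    { assert (Hw1 : -1 <= w) by (unfold w; apply Rle_div_r; [lra|]; unfold L; lra).
      assert (Hw2 : w <= 1) by (unfold w; apply Rle_div_l; [lra|]; unfold L; lra).
      simpl; nra. }
    assert (Hw0 : 0 <= w ^ 2) by (apply pow2_ge_0).
    eapply Rle_trans.
    + apply pow_incr. split; [apply Rabs_pos|exact H2].
    + rewrite Rpow_mult_distr. fold K. apply Rmult_le_compat_l; [exact HK|].
      apply chord. lra.
  - rewrite (is_RInt_unique _ _ _ _ Hq).
    assert (K <= (M * hh / 4) ^ p) by (apply pow_incr; unfold L in *; split; nra).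
    assert (0 <= (2 ^ p + 2) / 3) by (assert (0 < 2 ^ p) by (apply pow_lt; lra); lra).
    replace (K * L * ((2 ^ p + 2) / 3)) with (K * ((2 ^ p + 2) / 3) * L) by ring.
    apply Rmult_le_compat_r; [lra|]. apply Rmult_le_compat_r; lra.
Qed.

Lemma xmono (x : nat -> R) (N : nat) : (forall i, (i <= N)%nat -> x i < x (S i)) ->
  forall j, (j <= S N)%nat -> forall i, (i <= j)%nat -> x i <= x j.
Proof.
  intros Hx j. induction j as [|j IH]; intros Hj i Hi.
  - replace i with 0%nat by lia. lra.
  - destruct (Nat.eq_dec i (S j)) as [->|Hne]; [lra|].
    assert (x i <= x j) by (apply IH; lia).
    assert (x j < x (S j)) by (apply Hx; lia). lra.
Qed.

Lemma hmax_ge (x : nat -> R) (N : nat) : forall i, (i <= N)%nat -> x (S i) - x i <= hmax x N.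
Proof.
  induction N as [|N IH]; intros i Hi.
  - replace i with 0%nat by lia. simpl. lra.
  - simpl. destruct (Nat.eq_dec i (S N)) as [->|Hne].
    + apply Rmax_r.
    + eapply Rle_trans; [apply IH; lia|apply Rmax_l].
Qed.

Theorem theorem2p4 (p n N : nat) (u uI : R -> R) (x : nat -> R) (m2 M2 : R) :
  (2 <= p)%nat -> (1 <= n)%nat ->
  C2_on_01 u ->
  m2 <= M2 ->
  (forall t, 0 <= t <= 1 -> m2 <= Derive (Derive u) t <= M2) ->
  partition01 x N ->
  P1_interpolant u uI x N ->
  let h := hmax x N in
  W1p_pow p (fun t => u t - uI t) <=
    (INR n + 2) ^ (p - 1) / (INR p + 1)
      * (1 / (2 ^ (p - 1) * INR n ^ p) + 2 * Sstar p n / INR n ^ (2 * p + 1))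
      * (h ^ p + h ^ (2 * p) / INR p) * sup_norm_d2 u ^ p
    + 1 / (3 * INR n) * (3 / 8) ^ p * (h ^ p + h ^ (2 * p) / INR p)
      * (M2 - m2) ^ p.
Proof.
  intros Hp Hn HC Hm HB Hpart HI h.
  destruct Hpart as [Hx0 [Hx1 Hxi]]. destruct HI as [HcI [Haff HuI]].
  destruct (sup_prop u m2 M2 HB) as [HM HM0].
  set (M := sup_norm_d2 u) in *.
  assert (Hx01 : forall i, (i <= S N)%nat -> 0 <= x i <= 1).
  { intros i Hi. split.
    - rewrite <- Hx0. apply (xmono x N Hxi i Hi). lia.
    - rewrite <- Hx1. apply (xmono x N Hxi (S N) (le_n _)). lia. }
  assert (Hh : forall i, (i <= N)%nat -> x (S i) - x i <= h) by (intros; apply hmax_ge; auto).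
  assert (Hh0 : 0 < h) by (assert (H0 := Hh 0%nat (Nat.le_0_l _)); assert (H1 := Hxi 0%nat (Nat.le_0_l _)); lra).
  assert (E1 : RInt (fun t => Rabs (u t - uI t) ^ p) 0 1 <= (M * h ^ 2 / 8) ^ p).
  { apply (sum_int _ x N _ Hx0 Hx1). intros i Hi.
    destruct (Haff i Hi) as [al [be Hab]].
    assert (Hi1 := Hx01 i ltac:(lia)). assert (Hi2 := Hx01 (S i) ltac:(lia)).
    assert (Hlt := Hxi i Hi).
    apply (int_e u uI M (x i) (x (S i)) al be h p HC HM HcI); try lra; auto.
    apply HuI; lia. }
  assert (E2 : RInt (fun t => Rabs (Derive (fun t => u t - uI t) t) ^ p) 0 1 <= (M * h / 4) ^ p * ((2 ^ p + 2) / 3)).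
  { apply (sum_int _ x N _ Hx0 Hx1). intros i Hi.
    destruct (Haff i Hi) as [al [be Hab]].
    assert (Hi1 := Hx01 i ltac:(lia)). assert (Hi2 := Hx01 (S i) ltac:(lia)).
    assert (Hlt := Hxi i Hi).
    apply (int_d u uI M (x i) (x (S i)) al be h p HC HM); try lra; auto.
    apply HuI; lia. }
  unfold W1p_pow, Lp_pow.
  assert (HK := disc p n Hp Hn).
  set (K := (INR n + 2) ^ (p - 1) / (INR p + 1) *
     (1 / (2 ^ (p - 1) * INR n ^ p) + 2 * Sstar p n / INR n ^ (2 * p + 1))) in *.
  assert (Hn0 : 0 < INR n) by (apply lt_0_INR; lia).
  assert (Hp0 : 2 <= INR p) by (replace 2 with (INR 2) by (simpl; lra); apply le_INR; lia).
  assert (HT2 : 0 <= 1 / (3 * INR n) * (3 / 8) ^ p * (h ^ p + h ^ (2 * p) / INR p) * (M2 - m2) ^ p).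
  { apply Rmult_le_pos; [apply Rmult_le_pos; [apply Rmult_le_pos|]|].
    - apply Rle_mult_inv_pos; lra.
    - apply pow_le; lra.
    - assert (0 <= h ^ p) by (apply pow_le; lra).
      assert (0 <= h ^ (2 * p) / INR p) by (apply Rle_mult_inv_pos; [apply pow_le|]; lra). lra.
    - apply pow_le; lra. }
  set (T2 := 1 / (3 * INR n) * (3 / 8) ^ p * (h ^ p + h ^ (2 * p) / INR p) * (M2 - m2) ^ p) in *.
  set (X := 2 ^ p).
  assert (HX : 4 <= X).
  { unfold X. replace p with (2 + (p - 2))%nat by lia. rewrite pow_add.
    assert (1 <= 2 ^ (p - 2)) by (apply pow_R1_Rle; lra). simpl. lra. }
  assert (HX2 : 1 + 3 * INR p <= X * X).
  { unfold X. rewrite <- Rpow_mult_distr. replace (2 * 2) with (1 + 3) by ring. replace (3 * INR p) with (INR p * 3) by ring. apply bern. lra. }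
  assert (EX : 2 ^ (p + 1) = 2 * X) by (unfold X; rewrite pow_add; simpl; ring).
  rewrite EX in HK.
  set (Mp := M ^ p). set (hp := h ^ p).
  assert (HMp : 0 <= Mp) by (apply pow_le; lra).
  assert (Hhp : 0 <= hp) by (apply pow_le; lra).
  assert (Eh2 : h ^ (2 * p) = hp * hp) by (unfold hp; rewrite <- pow_add; f_equal; lia).
  assert (HXp : 0 < X) by lra.
  assert (P1 : (M * h ^ 2 / 8) ^ p = Mp * (h ^ 2) ^ p * / 8 ^ p).
  { unfold Rdiv. rewrite !Rpow_mult_distr, pow_inv. reflexivity. }
  assert (P2 : (h ^ 2) ^ p = hp * hp).
  { rewrite <- pow_mult. rewrite <- Eh2. f_equal; lia. }
  assert (P3 : 8 ^ p = X * X * X).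
  { unfold X. rewrite <- !Rpow_mult_distr. f_equal; ring. }
  assert (P4 : (M * h / 4) ^ p = Mp * hp * / 4 ^ p).
  { unfold Rdiv. rewrite !Rpow_mult_distr, pow_inv. reflexivity. }
  assert (P5 : 4 ^ p = X * X).
  { unfold X. rewrite <- !Rpow_mult_distr. f_equal; ring. }
  assert (Ee : (M * h ^ 2 / 8) ^ p = Mp * (hp * hp) / (X * X * X)).
  { rewrite P1, P2, P3. unfold Rdiv. ring. }
  assert (Ed : (M * h / 4) ^ p * ((X + 2) / 3) = Mp * hp * (X + 2) / (3 * (X * X))).
  { rewrite P4, P5. field. lra. }
  fold X in E2. rewrite Ed in E2. rewrite Ee in E1. rewrite Eh2.
  assert (K1 : (X + 2) / (3 * (X * X)) <= K).
  { eapply Rle_trans; [|exact HK]. apply Rle_div_l; [nra|].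
    rewrite <- (Rmult_1_l (/ (2 * X))). change (1 * / (2 * X)) with (1 / (2 * X)).
    replace (1 / (2 * X) * (3 * (X * X))) with (3 * X / 2) by (field; lra). lra. }
  assert (K2 : 1 / (X * X * X) <= K / INR p).
  { assert (Hpp : INR p > 0) by lra. apply (proj1 (Rle_div_r _ _ _ Hpp)). eapply Rle_trans; [|exact HK].
    replace (1 / (X * X * X) * INR p) with (INR p * / (X * X * X)) by (field; lra).
    replace (/ (2 * X)) with ((X * X / 2) * / (X * X * X)) by (field; lra).
    apply Rmult_le_compat_r; [left; apply Rinv_0_lt_compat; nra|lra]. }
  assert (A1 : Mp * hp * (X + 2) / (3 * (X * X)) <= K * hp * Mp).
  { replace (Mp * hp * (X + 2) / (3 * (X * X))) with ((X + 2) / (3 * (X * X)) * (hp * Mp)) by (field; lra).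
    rewrite Rmult_assoc. apply Rmult_le_compat_r; [nra|exact K1]. }
  assert (A2 : Mp * (hp * hp) / (X * X * X) <= K * (hp * hp / INR p) * Mp).
  { replace (Mp * (hp * hp) / (X * X * X)) with (1 / (X * X * X) * (hp * hp * Mp)) by (field; lra).
    replace (K * (hp * hp / INR p) * Mp) with (K / INR p * (hp * hp * Mp)) by (field; lra).
    apply Rmult_le_compat_r; [|exact K2]. apply Rmult_le_pos; [nra|lra]. }
  fold Mp.
  lra.
Qed.
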